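(* Let $\gamma\in(1,3)$, $\mu\in(0,1)$, $K>0$, $U_D=\frac{2}{3-\gamma}$ and \[ y_D=-K\frac{\big(U_D-\frac{2\mu}{\gamma+1}\big)^{\frac1\mu-1}}{U_D^{\frac1\mu}}<0. \] Define $U^{\mathrm{sp}}=U^{\mathrm{sp}}(y)$ for $y_D<y<0$ by \[ y=-K\frac{\big(U^{\mathrm{sp}}-\frac{2\mu}{\gamma+1}\big)^{\frac1\mu-1}}{(U^{\mathrm{sp}})^{\frac1\mu}},\qquad y_D<y<0,\ U^{\mathrm{sp}}>U_D. \] Then $U^{\mathrm{sp}}$ solves \[ y\frac{dU}{dy}=-\frac{[(\gamma+1)U-2\mu]U}{(\gamma+1)U-2}, \] satisfies $\lim_{y\to0^-}yU^{\mathrm{sp}}(y)=-K$, and $\frac{2}{3-\gamma}=U_D<U^{\mathrm{sp}}<\infty$. *)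

(* Defs.v *)
From Stdlib Require Import Reals.
From Coquelicot Require Import Coquelicot.
Open Scope R_scope.

Definition U_D (gamma : R) : R := 2 / (3 - gamma).

Definition Fsp (gamma mu K U : R) : R :=
  - K * Rpower (U - 2 * mu / (gamma + 1)) (1 / mu - 1) / Rpower U (1 / mu).

Definition y_D (gamma mu K : R) : R := Fsp gamma mu K (U_D gamma).

Definition ode_rhs (gamma mu U : R) : R :=
  - (((gamma + 1) * U - 2 * mu) * U) / ((gamma + 1) * U - 2).

(* Main.v *)
Require Import Defs.
From Stdlib Require Import Reals.
From Coquelicot Require Import Coquelicot.
Open Scope R_scope.
From Stdlib Require Import Ranalysis5 Lra.
Lemma Fsp_deriv g m K U : 0 < m -> 0 < g + 1 -> 2*m/(g+1) < U -> 0 < U ->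
  is_derive (Fsp g m K) U
   (Fsp g m K U * ((1/m - 1)/(U - 2*m/(g+1)) - (1/m)/U)).
Proof.
  intros hm hg hU hU0.
  assert (hc : 2*m = (2*m/(g+1))*(g+1)) by (field; lra).
  assert (U*(g+1) - 2*m > 0) by nra.
  unfold Fsp, Rpower.
  auto_derive.
  - repeat split; try lra. apply Rgt_not_eq, exp_pos.
  - unfold Rminus.
    assert (exp (1 / m * ln U) <> 0) by apply Rgt_not_eq, exp_pos.
    assert (U + - (2 * m / (g + 1)) <> 0) by lra.
    field; repeat split; lra.
Qed.

Lemma Fsp_neg g m K U : 0 < K -> 2*m/(g+1) < U -> 0 < U -> Fsp g m K U < 0.
Proof.
  intros hK hU hU0. unfold Fsp, Rpower.
  set (E1 := exp _). set (E2 := exp (_ * ln U)).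
  assert (0 < E1) by apply exp_pos. assert (0 < E2) by apply exp_pos.
  assert (0 < K * E1 * / E2) by (apply Rmult_lt_0_compat; [nra| apply Rinv_0_lt_compat; lra]).
  replace (-K*E1/E2) with (-(K*E1*/E2)) by (unfold Rdiv; ring). lra.
Qed.

Lemma D_neg g m U : 0 < m -> m < 1 -> 0 < g + 1 -> 2/(g+1) < U ->
  (1/m - 1)/(U - 2*m/(g+1)) - (1/m)/U < 0.
Proof.
  intros hm hm1 hg hU.
  assert (hc : 2*m = (2*m/(g+1))*(g+1)) by (field; lra).
  assert (hb : 2 = (2/(g+1))*(g+1)) by (field; lra).
  assert (0 < 2/(g+1)) by (apply Rdiv_lt_0_compat; lra).
  assert (2*m/(g+1) < 2/(g+1)) by nra.
  assert (0 < 2*m/(g+1)) by (apply Rdiv_lt_0_compat; lra).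
  replace ((1/m - 1)/(U - 2*m/(g+1)) - (1/m)/U) with
     ((2/(g+1) - U) * / (U*(U - 2*m/(g+1)))).
  2:{ field. repeat split; try lra. intro. nra. }
  assert (0 < / (U*(U - 2*m/(g+1)))).
  { apply Rinv_0_lt_compat. nra. }
  nra.
Qed.

Lemma Fsp_incr g m K U1 U2 : 0 < m -> m < 1 -> 0 < g + 1 -> 0 < K ->
  2/(g+1) < U1 -> U1 < U2 -> Fsp g m K U1 < Fsp g m K U2.
Proof.
  intros hm hm1 hg hK h1 h12.
  assert (hb : 2 = (2/(g+1))*(g+1)) by (field; lra).
  assert (0 < 2/(g+1)) by (apply Rdiv_lt_0_compat; lra).
  assert (2*m/(g+1) < 2/(g+1)).
  { unfold Rdiv. apply Rmult_lt_compat_r. apply Rinv_0_lt_compat; lra. lra. }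
  apply (incr_function (Fsp g m K) (Finite (2/(g+1))) p_infty
     (fun U => Fsp g m K U * ((1/m - 1)/(U - 2*m/(g+1)) - (1/m)/U))); simpl; auto.
  - intros x hx _. apply Fsp_deriv; lra.
  - intros x hx _. 
    assert (Fsp g m K x < 0) by (apply Fsp_neg; lra).
    assert (Hd := D_neg g m x hm hm1 hg hx). nra.
Qed.

Lemma Fsp_cont g m K U : 0 < m -> 0 < g + 1 -> 2*m/(g+1) < U -> 0 < U ->
  continuity_pt (Fsp g m K) U.
Proof.
  intros. apply derivable_continuous_pt.
  eexists. apply is_derive_Reals. apply Fsp_deriv; auto.
Qed.

Lemma exp_b m U : 0 < m -> 0 < U ->
  exp (1/m * ln U) = exp ((1/m - 1) * ln U) * U.
Proof.
  intros. replace (1/m * ln U) with ((1/m-1) * ln U + ln U) by ring.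
  rewrite exp_plus, exp_ln; auto.
Qed.

Lemma Fsp_bound g m K U : 0 < m -> m < 1 -> 0 < K -> 0 < 2*m/(g+1) -> 2*m/(g+1) < U ->
  - K / U <= Fsp g m K U.
Proof.
  intros hm hm1 hK hc hU.
  assert (0 < U) by lra.
  unfold Fsp, Rpower. rewrite (exp_b m U) by auto.
  assert (ln (U - 2*m/(g+1)) <= ln U) by (apply Rlt_le, ln_increasing; lra).
  assert (0 <= 1/m - 1).
  { assert (1 < 1/m). { apply Rmult_lt_reg_r with m; auto. field_simplify; lra. } lra. }
  assert (exp ((1/m-1) * ln (U - 2*m/(g+1))) <= exp ((1/m-1) * ln U)).
  { assert (HH : (1/m-1) * ln (U - 2*m/(g+1)) <= (1/m-1) * ln U) by nra.
    destruct (Rle_lt_or_eq_dec _ _ HH) as [h|h]; [apply Rlt_le, exp_increasing; auto | rewrite h; lra]. }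
  set (E1 := exp ((1/m-1) * ln (U - 2*m/(g+1)))) in *.
  set (E2 := exp ((1/m-1) * ln U)) in *.
  assert (0 < E2) by apply exp_pos.
  replace (- K / U) with (-K * E2 / (E2 * U)) by (field; lra).
  unfold Rdiv. 
  assert (0 < / (E2 * U)) by (apply Rinv_0_lt_compat; nra).
  assert (0 <= K*(E2-E1)) by nra.
  set (I := / (E2 * U)) in *. nra.
Qed.

Lemma h_lim K a c : is_lim (fun U => -K * exp (a * ln (1 - c / U))) p_infty (-K).
Proof.
  assert (H1 : is_lim (fun U => 1 - c / U) p_infty 1).
  { assert (E : 1 - c * 0 = 1) by ring.
    assert (H0 : is_lim (fun U => 1 - c / U) p_infty (1 - c * 0)).
    { apply is_lim_minus'. apply is_lim_const.
    apply (is_lim_scal_l (fun U => / U) c p_infty 0).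
    apply (is_lim_inv (fun U => U) p_infty p_infty). apply is_lim_id. discriminate. }
    rewrite E in H0. exact H0. }
  assert (Hc : continuous (fun t => -K * exp (a * ln t)) 1).
  { apply (ex_derive_continuous (K:=R_AbsRing) (V:=R_NormedModule)). auto_derive. lra. }
  pose proof (is_lim_comp_continuous _ _ _ _ H1 Hc) as H.
  simpl in H. rewrite ln_1, Rmult_0_r, exp_0, Rmult_1_r in H. exact H.
Qed.

Lemma Fsp_h g m K U : 0 < g + 1 -> 0 < 2*m/(g+1) -> 2*m/(g+1) < U -> 0 < m ->
  Fsp g m K U * U = -K * exp ((1/m - 1) * ln (1 - 2*m/(g+1) / U)).
Proof.
  intros hg hc hU hm. assert (0 < U) by lra.
  unfold Fsp, Rpower. rewrite (exp_b m U) by auto.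
  replace (1 - 2*m/(g+1)/U) with ((U - 2*m/(g+1))/U). 2:{ field. split; lra. }
  rewrite ln_div by lra.
  rewrite Rmult_minus_distr_l.
  set (A := (1/m-1)*ln(U - 2*m/(g+1))). set (B := (1/m-1)*ln U).
  replace (exp (A - B)) with (exp A * / exp B) by (unfold Rminus; rewrite exp_plus, exp_Ropp; reflexivity).
  assert (0 < exp ((1 / m - 1) * ln U)) by apply exp_pos.
  field. split; [apply Rgt_not_eq, exp_pos | lra].
Qed.
Theorem lemma3p9 (gamma mu K : R)
  (hg1 : 1 < gamma) (hg3 : gamma < 3) (hm0 : 0 < mu) (hm1 : mu < 1) (hK : 0 < K) :
  y_D gamma mu K < 0 /\
  (forall y, y_D gamma mu K < y < 0 ->
     exists! U, U_D gamma < U /\ y = Fsp gamma mu K U) /\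
  (forall Usp : R -> R,
     (forall y, y_D gamma mu K < y < 0 ->
        U_D gamma < Usp y /\ y = Fsp gamma mu K (Usp y)) ->
     (forall y, y_D gamma mu K < y < 0 ->
        ex_derive Usp y /\ y * Derive Usp y = ode_rhs gamma mu (Usp y)) /\
     filterlim (fun y => y * Usp y) (at_left 0) (locally (- K)) /\
     (forall y, y_D gamma mu K < y < 0 -> U_D gamma < Usp y)).
Proof.
  assert (hg : 0 < gamma + 1) by lra.
  assert (hb : 2 = (2/(gamma+1))*(gamma+1)) by (field; lra).
  assert (hb0 : 0 < 2/(gamma+1)) by (apply Rdiv_lt_0_compat; lra).
  assert (hcb : 2*mu/(gamma+1) < 2/(gamma+1)).
  { unfold Rdiv. apply Rmult_lt_compat_r. apply Rinv_0_lt_compat; lra. lra. }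
  assert (hc0 : 0 < 2*mu/(gamma+1)) by (apply Rdiv_lt_0_compat; lra).
  assert (hUD : 2/(gamma+1) < U_D gamma).
  { unfold U_D, Rdiv. apply Rmult_lt_compat_l; [lra|]. apply Rinv_lt_contravar; nra. }
  set (UD := U_D gamma) in *.
  set (F := Fsp gamma mu K).
  assert (incr : forall U1 U2, UD <= U1 -> U1 < U2 -> F U1 < F U2).
  { intros. apply Fsp_incr; auto; lra. }
  assert (hyD : y_D gamma mu K = F UD) by reflexivity.
  rewrite hyD.
  assert (hFneg : forall U, UD <= U -> F U < 0).
  { intros. apply Fsp_neg; lra. }
  split; [apply hFneg; lra|].
  split.
  - intros y [h1 h2].
    set (M := UD + 1 + 2*K/(-y)).
    assert (hKy : 0 < 2*K/(-y)) by (apply Rdiv_lt_0_compat; lra).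
    assert (hyM : y*M < -K).
    { unfold M. replace (y*(UD+1+2*K/(-y))) with (y*(UD+1) - 2*K) by (field; lra). nra. }
    assert (hMy : y < -K/M).
    { apply Rmult_lt_reg_r with M. unfold M; lra.
      replace (-K/M*M) with (-K) by (field; unfold M; lra). lra. }
    assert (hFM : y < F M).
    { pose proof (Fsp_bound gamma mu K M hm0 hm1 hK hc0 ltac:(unfold M; lra)). unfold F. lra. }
    destruct (IVT_interv (fun U => F U - y) UD M) as [z [hz1 hz2]].
    + intros a ha. apply continuity_pt_minus.
      * apply Fsp_cont; lra.
      * apply continuity_pt_const. intros ? ?; reflexivity.
    + unfold M; lra.
    + lra.
    + lra.
    + assert (hzne : z <> UD) by (intro e; subst z; lra).
      exists z. split.
      * split; lra.
      * intros x' [hx' e].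
        destruct (Rtotal_order z x') as [hl|[he|hl]]; auto.
        -- pose proof (incr z x' ltac:(lra) hl). fold F in e. lra.
        -- pose proof (incr x' z ltac:(lra) hl). fold F in e. lra.
  - intros Usp HU.
    assert (mono : forall y1 y2, F UD < y1 -> y1 < y2 -> y2 < 0 -> Usp y1 < Usp y2).
    { intros y1 y2 a1 a12 a2.
      destruct (HU y1 ltac:(lra)) as [u1 e1]. destruct (HU y2 ltac:(lra)) as [u2 e2].
      destruct (Rtotal_order (Usp y1) (Usp y2)) as [hl|[he|hl]]; auto.
      - fold F in e1, e2. rewrite he in e1. lra.
      - pose proof (incr (Usp y2) (Usp y1) ltac:(lra) hl). fold F in e1, e2. lra. }
    split; [|split].
    + intros y [h1 h2].
      set (lb := (F UD + y)/2). set (ub := y/2).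
      assert (hlb : F UD < lb < y) by (unfold lb; lra).
      assert (hub : y < ub < 0) by (unfold ub; lra).
      destruct (HU lb ltac:(lra)) as [ulb Flb]. destruct (HU ub ltac:(lra)) as [uub Fub].
      destruct (HU y ltac:(lra)) as [uy Fy].
      fold F in Flb, Fub, Fy.
      assert (m1 := mono lb y ltac:(lra) ltac:(lra) ltac:(lra)).
      assert (m2 := mono y ub ltac:(lra) ltac:(lra) ltac:(lra)).
      set (dF := fun U => F U * ((1/mu - 1)/(U - 2*mu/(gamma+1)) - (1/mu)/U)).
      assert (HdF : forall a, UD < a -> derivable_pt_lim F a (dF a)).
      { intros a ha. apply is_derive_Reals. apply Fsp_deriv; lra. }
      assert (Prf : forall a, Usp lb <= a <= Usp ub -> derivable_pt F a).
      { intros a ha. exists (dF a). apply HdF. lra. }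
      assert (Hwf : forall x, F (Usp lb) <= x -> x <= F (Usp ub) -> Usp lb <= Usp x <= Usp ub).
      { rewrite <- Flb, <- Fub. intros x hx1 hx2.
        destruct (Rle_lt_or_eq_dec _ _ hx1) as [l1|e1]; [|subst x; split; lra].
        destruct (Rle_lt_or_eq_dec _ _ hx2) as [l2|e2]; [|subst x; split; lra].
        split; apply Rlt_le; apply mono; lra. }
      assert (Heq : forall x, F (Usp lb) <= x -> x <= F (Usp ub) -> comp F Usp x = id x).
      { rewrite <- Flb, <- Fub. intros x hx1 hx2. unfold comp, id. symmetry. apply HU. lra. }
      assert (Prg : continuity_pt Usp y).
      { apply (continuity_pt_recip_interv F Usp (Usp lb) (Usp ub)); auto.
        - lra.
        - intros; apply incr; lra.
        - intros a ha. apply Fsp_cont; lra.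
        - rewrite <- Flb, <- Fub. lra. }
      assert (Prg_incr : Usp lb <= Usp y <= Usp ub) by lra.
      assert (Hneq : derive_pt F (Usp y) (Prf (Usp y) Prg_incr) <> 0).
      { rewrite (derive_pt_eq_0 _ _ (dF (Usp y))) by (apply HdF; lra).
        unfold dF. apply Rmult_integral_contrapositive. split.
        - apply Rlt_not_eq, hFneg. lra.
        - apply Rlt_not_eq, D_neg; lra. }
      assert (Hd := derivable_pt_lim_recip_interv F Usp lb ub y Prf Prg ltac:(lra) ltac:(lra)
                   Prg_incr ltac:(intros x hx; apply Heq; rewrite <- ?Flb, <- ?Fub; lra) Hneq).
      rewrite (derive_pt_eq_0 _ _ (dF (Usp y))) in Hd by (apply HdF; lra).
      apply is_derive_Reals in Hd.
      split; [eexists; exact Hd|].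
      rewrite (is_derive_unique _ _ _ Hd).
      assert (hFU : F (Usp y) < 0) by (apply hFneg; lra).
      assert (hD := D_neg gamma mu (Usp y) hm0 hm1 hg ltac:(lra)).
      set (U := Usp y) in *. clearbody U.
      assert (hU1 : 0 < (gamma+1)*U - 2) by nra.
      assert (hc : 2*mu = (2*mu/(gamma+1))*(gamma+1)) by (field; lra).
      assert (hU2 : 0 < (gamma+1)*U - 2*mu) by nra.
      unfold dF, ode_rhs. rewrite Fy at 1.
      set (Fv := F U) in *.
      set (D := (1/mu - 1)/(U - 2*mu/(gamma+1)) - (1/mu)/U) in *.
      replace (Fv * (1 / (Fv * D))) with (1/D) by (field; split; lra).
      unfold D. field. repeat split; try lra. intro e. nra.
    + assert (HUinf : filterlim Usp (at_left 0) (Rbar_locally p_infty)).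
      { intros P [M HM]. set (M' := Rmax M (UD+1)).
        assert (hM1 := Rmax_r M (UD+1)). assert (hM2 := Rmax_l M (UD+1)). fold M' in hM1, hM2.
        assert (hFM' : F M' < 0) by (apply hFneg; lra).
        assert (hFUD : F UD < F M') by (apply incr; lra).
        exists (mkposreal (- F M') ltac:(lra)). intros y hy hy0. apply HM.
        unfold ball in hy; simpl in hy; unfold AbsRing_ball, abs, minus, plus, opp in hy; simpl in hy.
        apply Rabs_def2 in hy. destruct hy as [_ hy].
        destruct (HU y ltac:(lra)) as [uy Fy].
        destruct (Rlt_or_le M' (Usp y)) as [l|l]; [lra|].
        destruct (Rle_lt_or_eq_dec _ _ l) as [l2|e2].
        - pose proof (incr (Usp y) M' ltac:(lra) l2). fold F in Fy. lra.
        - fold F in Fy. rewrite e2 in Fy. lra. }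
      apply filterlim_ext_loc with (fun y => -K * exp((1/mu-1)*ln(1 - 2*mu/(gamma+1)/Usp y))).
      { assert (0 < - F UD) by (assert (F UD < 0) by (apply hFneg; lra); lra).
        exists (mkposreal (- F UD) H). intros y hy hy0.
        unfold ball in hy; simpl in hy; unfold AbsRing_ball, abs, minus, plus, opp in hy; simpl in hy.
        apply Rabs_def2 in hy. destruct hy as [_ hy].
        destruct (HU y ltac:(lra)) as [uy Fy].
        symmetry. rewrite Fy at 1. unfold F. apply Fsp_h; lra. }
      apply (filterlim_comp _ _ _ Usp (fun U => -K * exp((1/mu-1)*ln(1 - 2*mu/(gamma+1)/U))) _ (Rbar_locally p_infty)). exact HUinf. exact (h_lim K (1/mu-1) (2*mu/(gamma+1))).
    + intros y hy. apply (HU y hy).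
Qed.
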